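(* Let $p$ be an odd prime and let $\zeta\in\mathbb{Z}_p$ be such that $-\zeta$ is not a square modulo $p$. Let $\alpha,\beta,\gamma\in\mathbb{Z}_p$ and let $k\ge0$ be an integer such that: - $p^k\mid\alpha$ and $p^k\mid(\beta-\gamma)$; - $p^{k+1}\nmid\alpha$ or $p^{k+1}\nmid(\beta-\gamma)$. Let $$f(x)=(x^2+p\alpha x+p\beta+\zeta)(x^2-p\alpha x+p\gamma+\zeta).$$ Then every monic degree-$4$ polynomial $g\in\mathbb{Z}_p[x]$ with $g\equiv f\pmod{p^{2k+3}}$ (coefficientwise) is reducible in $\mathbb{Z}_p[x]$.
   Context: Reducible means it can be written as a product of two nonconstant polynomials in $\mathbb{Z}_p[x]$. *)

(* Defs.v *)
(* The ring Z_p of p-adic integers is not in the libraries;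
   we construct it here honestly as the inverse limit of Z/p^nZ:
   compatible sequences (x_n)_n of integers with 0 <= x_n < p^n and
   x_n = x_{n+1} mod p^n, with componentwise ring operations mod p^n. *)
From HB Require Import structures.
From mathcomp Require Import all_boot all_order all_algebra.
From mathcomp Require Import boolp.
From Stdlib Require Import FunctionalExtensionality ProofIrrelevance.
Set Implicit Arguments. Unset Strict Implicit. Unset Printing Implicit Defensive.
Import Order.TTheory GRing.Theory Num.Theory.
Local Open Scope ring_scope.

(* The base is maxn p 2 (as for 'Z_p in zmodp), so that the type is a genuine
   nonzero ring for every p; for a prime p this is just p. *)
Definition padic_base (p : nat) : nat := maxn p 2.
Definition padic_mod (p n : nat) : int := ((padic_base p) ^ n)%:Z.

Definition padic_pred (p : nat) (x : nat -> int) : Prop :=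
  forall n, x n = (x n.+1 %% padic_mod p n)%Z.

Record padic (p : nat) := Padic { pval : nat -> int; pvalP : padic_pred p pval }.

HB.instance Definition _ p := gen_eqMixin (padic p).
HB.instance Definition _ p := gen_choiceMixin (padic p).

Section PadicRing.
Variable p : nat.
Local Notation m := (padic_mod p).

Lemma padic_mod_gt0 n : 0 < m n.
Proof.
rewrite /padic_mod ltz_nat expn_gt0 /padic_base.
by apply/orP; left; rewrite leq_max orbT.
Qed.

Lemma padic_modS n : m n.+1 = (padic_base p)%:Z * m n.
Proof. by rewrite /padic_mod expnS PoszM. Qed.

Lemma modz_modS (a : int) n : modz (modz a (m n.+1)) (m n) = modz a (m n).
Proof.
rewrite {2}(divz_eq a (m n.+1)) padic_modS mulrA modzMDl.
by [].
Qed.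

Lemma padic_red (x : padic p) n : modz (pval x n) (m n) = pval x n.
Proof. by rewrite (pvalP x n) modz_mod. Qed.

Lemma padic_eq (x y : padic p) : (forall n, pval x n = pval y n) -> x = y.
Proof.
case: x y => [x Hx] [y Hy] /= E.
have Exy : x = y by apply: functional_extensionality.
subst y; by rewrite (proof_irrelevance _ Hx Hy).
Qed.

Definition padic_of (f : nat -> int) (H : padic_pred p f) := Padic H.

Lemma zero_proof : padic_pred p (fun _ => 0).
Proof. by move=> n; rewrite mod0z. Qed.
Definition pzero := Padic zero_proof.

Lemma one_proof : padic_pred p (fun n => (1 %% m n)%Z).
Proof. by move=> n; rewrite modz_modS. Qed.
Definition pone := Padic one_proof.

Lemma add_proof (x y : padic p) :
  padic_pred p (fun n => (pval x n + pval y n) %% m n)%Z.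
Proof.
move=> n; rewrite modz_modS (pvalP x n) (pvalP y n).
by rewrite modzDml modzDmr.
Qed.
Definition padd x y := Padic (add_proof x y).

Lemma opp_proof (x : padic p) :
  padic_pred p (fun n => (- pval x n) %% m n)%Z.
Proof. by move=> n; rewrite modz_modS (pvalP x n) modzNm. Qed.
Definition popp x := Padic (opp_proof x).

Lemma mul_proof (x y : padic p) :
  padic_pred p (fun n => (pval x n * pval y n) %% m n)%Z.
Proof.
move=> n; rewrite modz_modS (pvalP x n) (pvalP y n).
by rewrite modzMml modzMmr.
Qed.
Definition pmul x y := Padic (mul_proof x y).

Lemma paddA : associative padd.
Proof. by move=> x y z; apply: padic_eq => n /=; rewrite modzDml modzDmr addrA. Qed.
Lemma paddC : commutative padd.
Proof. by move=> x y; apply: padic_eq => n /=; rewrite addrC. Qed.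
Lemma padd0 : left_id pzero padd.
Proof. by move=> x; apply: padic_eq => n /=; rewrite add0r padic_red. Qed.
Lemma paddN : left_inverse pzero popp padd.
Proof. by move=> x; apply: padic_eq => n /=; rewrite modzDml addNr mod0z. Qed.

HB.instance Definition _ := GRing.isZmodule.Build (padic p) paddA paddC padd0 paddN.

Lemma pmulA : associative pmul.
Proof. by move=> x y z; apply: padic_eq => n /=; rewrite modzMml modzMmr mulrA. Qed.
Lemma pmulC : commutative pmul.
Proof. by move=> x y; apply: padic_eq => n /=; rewrite mulrC. Qed.
Lemma pmul1 : left_id pone pmul.
Proof. by move=> x; apply: padic_eq => n /=; rewrite modzMml mul1r padic_red. Qed.
Lemma pmulDl : left_distributive pmul padd.
Proof.
move=> x y z; apply: padic_eq => n /=.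
by rewrite modzMml mulrDl modzDml modzDmr.
Qed.
Lemma pone_neq0 : pone != pzero.
Proof.
apply/eqP => /(f_equal (fun x => pval x 1)) /=.
rewrite /padic_mod expn1 modz_small //.
by apply/andP; split => //; rewrite ltz_nat /padic_base leq_max orbT.
Qed.

HB.instance Definition _ :=
  GRing.Zmodule_isComNzRing.Build (padic p) pmulA pmulC pmul1 pmulDl pone_neq0.

End PadicRing.

Notation "''Z_[' p ']'" := (padic p).

Definition rdvd (R : comNzRingType) (a b : R) : Prop := exists c : R, b = a * c.

Definition reducible (R : comNzRingType) (g : {poly R}) : Prop :=
  exists a b : {poly R}, (1 < size a)%N /\ (1 < size b)%N /\ g = a * b.

(* Main.v *)
Require Import Defs.
From mathcomp Require Import ring.
From HB Require Import structures.
From mathcomp Require Import all_boot all_order all_algebra.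
Import Order.TTheory GRing.Theory Num.Theory.
Set Implicit Arguments. Unset Strict Implicit.
Local Open Scope ring_scope.

Section Comp.
Variable p : nat.
Hypothesis p_prime : prime p.
Local Notation R := ('Z_[p]).
Local Notation m := (padic_mod p).

Lemma base_p : padic_base p = p.
Proof. by rewrite /padic_base; apply/maxn_idPl; apply: prime_gt1. Qed.

Lemma m_mul a b : m (a + b) = m a * m b.
Proof. by rewrite /padic_mod expnD PoszM. Qed.

Lemma m_neq0 n : m n != 0.
Proof. by rewrite gt_eqF // padic_mod_gt0. Qed.

Lemma modz_modM (a d e : int) : modz (modz a (d * e)) d = modz a d.
Proof.
by rewrite {2}(divz_eq a (d * e)) (mulrC d e) mulrA modzMDl.
Qed.

Lemma pval_low (z : R) n i : modz (pval z (n + i)) (m n) = pval z n.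
Proof.
elim: i => [|i IH]; first by rewrite addn0 padic_red.
rewrite addnS -IH (pvalP z (n + i)) m_mul modz_modM //.
Qed.

Lemma pvalD (x y : R) n : pval (x + y) n = modz (pval x n + pval y n) (m n).
Proof. by []. Qed.
Lemma pvalM (x y : R) n : pval (x * y) n = modz (pval x n * pval y n) (m n).
Proof. by []. Qed.
Lemma pvalN (x : R) n : pval (- x) n = modz (- pval x n) (m n).
Proof. by []. Qed.
Lemma pval1 n : pval (1 : R) n = modz 1 (m n).
Proof. by []. Qed.
Lemma pval0 n : pval (0 : R) n = 0.
Proof. by []. Qed.
Lemma pvalB (x y : R) n : pval (x - y) n = modz (pval x n - pval y n) (m n).
Proof. by rewrite pvalD pvalN modzDmr. Qed.

Lemma pval_nat k n : pval (k%:R : R) n = modz k (m n).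
Proof.
elim: k => [|k IH]; first by rewrite mod0z.
by rewrite mulrS pvalD IH pval1 modzDml modzDmr -addn1 PoszD addrC.
Qed.

Lemma pvalX (x : R) e n : pval (x ^+ e) n = modz (pval x n ^+ e) (m n).
Proof.
elim: e => [|e IH]; first by rewrite !expr0 pval1.
by rewrite exprS pvalM IH modzMmr -exprS.
Qed.

Lemma pval_eqB (x y : R) n : pval (x - y) n = 0 -> pval x n = pval y n.
Proof.
rewrite pvalB => H.
by rewrite -padic_red -(padic_red y) -(subrK (pval y n) (pval x n)) -modzDml H add0r.
Qed.

Definition dv n (x : R) := rdvd ((p%:R : R) ^+ n) x.

Lemma pval_pi n j : pval ((p%:R : R) ^+ n) j = modz (p ^ n)%:Z (m j).
Proof.
by rewrite pvalX pval_nat modzXm -(natz (p ^ n)) natrX natz.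
Qed.

Lemma dvP n (z : R) : dv n z <-> pval z n = 0.
Proof.
split.
  case=> c ->; rewrite pvalM pval_pi.
  have -> : m n = (p ^ n)%:Z by rewrite /padic_mod base_p.
  by rewrite modzz mul0r mod0z.
move=> Hz.
have Hd j : (m n %| pval z (n + j))%Z.
  by apply/dvdz_mod0P; rewrite pval_low.
pose c j := divz (pval z (n + j)) (m n).
have Hc j : c j * m n = pval z (n + j) by rewrite /c divzK.
have cP : padic_pred p c.
  move=> j; apply: (mulIf (m_neq0 n)).
  rewrite Hc mulz_modl ?padic_mod_gt0 // Hc -m_mul (addnC j n) addnS.
  exact: pvalP.
exists (Padic cP); apply: padic_eq => j.
rewrite pvalM pval_pi /= modzMml.
have -> : (p ^ n)%:Z = m n by rewrite /padic_mod base_p.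
by rewrite mulrC Hc addnC pval_low.
Qed.

Lemma dv_zero (z : R) : (forall n, dv n z) -> z = 0.
Proof. by move=> H; apply: padic_eq => n; rewrite pval0; apply/dvP. Qed.

Lemma limit (xs : nat -> R) : (forall n, dv n (xs n.+1 - xs n)) ->
  exists L, forall n, dv n (L - xs n).
Proof.
move=> H.
have lP : padic_pred p (fun n => pval (xs n) n).
  move=> n /=; rewrite -(pvalP (xs n.+1) n).
  by symmetry; apply: pval_eqB; apply/dvP.
exists (Padic lP) => n; apply/dvP.
by rewrite pvalB /= subrr mod0z.
Qed.


Local Notation pi := (p%:R : R).

Lemma dv0 x : dv 0 x.
Proof. by exists x; rewrite expr0 mul1r. Qed.
Lemma dvz n : dv n 0.
Proof. by exists 0; rewrite mulr0. Qed.
Lemma dvD n x y : dv n x -> dv n y -> dv n (x + y).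
Proof. by case=> a -> [b ->]; exists (a + b); rewrite mulrDr. Qed.
Lemma dvN n x : dv n x -> dv n (- x).
Proof. by case=> a ->; exists (- a); rewrite mulrN. Qed.
Lemma dvB n x y : dv n x -> dv n y -> dv n (x - y).
Proof. by move=> hx hy; apply: dvD => //; apply: dvN. Qed.
Lemma dvMr n x y : dv n x -> dv n (x * y).
Proof. by case=> a ->; exists (a * y); rewrite mulrA. Qed.
Lemma dvMl n x y : dv n y -> dv n (x * y).
Proof. by move=> h; rewrite mulrC; apply: dvMr. Qed.
Lemma dvM a b x y : dv a x -> dv b y -> dv (a + b) (x * y).
Proof.
by case=> u -> [w ->]; exists (u * w); rewrite exprD; ring.
Qed.
Lemma dv_le a b x : (a <= b)%N -> dv b x -> dv a x.
Proof.
move=> hab [c ->]; exists (pi ^+ (b - a) * c).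
by rewrite mulrA -exprD subnKC.
Qed.
Lemma dv_pi n : dv n (pi ^+ n).
Proof. by exists 1; rewrite mulr1. Qed.
Lemma dv_pi1 x : dv 1 (pi * x).
Proof. by apply: dvMr; exists 1; rewrite expr1 mulr1. Qed.

Lemma m1 : m 1 = Posz p.
Proof. by rewrite /padic_mod base_p expn1. Qed.

Lemma pval1E (x : R) : pval x 1 = Posz ((absz (pval x 1)) %% p)%N.
Proof.
have h0 : (0 <= pval x 1)%R by rewrite -padic_red modz_ge0 // m_neq0.
by rewrite -modz_nat gez0_abs // -m1 padic_red.
Qed.

Lemma dv1P (x : R) : dv 1 x <-> (p %| absz (pval x 1))%N.
Proof.
rewrite dvP {1}pval1E /dvdn; split.
  by move=> [->].
by move=> /eqP ->.
Qed.

Lemma dv1M (x y : R) : dv 1 (x * y) -> dv 1 x \/ dv 1 y.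
Proof.
rewrite !dv1P pvalM {1}(pval1E x) {1}(pval1E y) m1 -PoszM modz_nat /=.
rewrite {1}/dvdn modn_mod modnMml modnMmr -/(dvdn _ _) Euclid_dvdM //.
by case/orP; [left|right].
Qed.

Lemma approx_inv x : ~ dv 1 x -> exists v, dv 1 (1 - x * v).
Proof.
move=> hx; set a := absz (pval x 1).
have hpa : ~~ (p %| a)%N by apply/negP => h; apply: hx; apply/dv1P.
have cop : coprime p a by rewrite prime_coprime.
have [u _ hu] := Bezoutl a (prime_gt0 p_prime).
rewrite (eqP cop) in hu.
exists (- (u%:R)); rewrite mulrN opprK; apply/dvP.
rewrite pvalD pval1 pvalM pval_nat modzMmr modzDml modzDmr (pval1E x) m1 -/a.
have -> : (1 + Posz (a %% p)%N * Posz u = Posz (1 + (a %% p) * u)%N)%R.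
  by rewrite PoszD PoszM.
rewrite modz_nat; apply/eqP; rewrite eqz_nat -/(dvdn _ _).
by rewrite /dvdn -modnDmr modnMml modnDmr mulnC.
Qed.

Definition Tay (F j1 j2 : R -> R -> R) := forall x y a b, exists r1 r2 r3,
  F (x + a) (y + b) - F x y - (j1 x y * a + j2 x y * b) = a * a * r1 + a * b * r2 + b * b * r3.
Definition Jc (j : R -> R -> R) := forall x y a b, exists s1 s2,
  j (x + a) (y + b) - j x y = a * s1 + b * s2.

Lemma tay_dv F j1 j2 x y a b n : Tay F j1 j2 -> dv n a -> dv n b ->
  dv (n + n) (F (x + a) (y + b) - F x y - (j1 x y * a + j2 x y * b)).
Proof.
move=> /(_ x y a b) [r1 [r2 [r3 ->]]] ha hb.
by apply: dvD; [apply: dvD|]; apply: dvMr; apply: dvM.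
Qed.

Arguments tay_dv {F j1 j2} x y {a b n}.

Lemma tay_lip F j1 j2 x y a b n : Tay F j1 j2 -> dv n a -> dv n b ->
  dv n (F (x + a) (y + b) - F x y).
Proof.
move=> hT ha hb.
have := tay_dv x y hT ha hb => /(dv_le (leq_addr n n)) h.
have -> : F (x + a) (y + b) - F x y =
  (F (x + a) (y + b) - F x y - (j1 x y * a + j2 x y * b)) + (j1 x y * a + j2 x y * b).
  by rewrite subrK.
by apply: dvD => //; apply: dvD; apply: dvMl.
Qed.

Arguments tay_lip {F j1 j2} x y {a b n}.

Lemma jc_dv j x y x' y' : Jc j -> dv 1 (x' - x) -> dv 1 (y' - y) ->
  dv 1 (j x' y' - j x y).
Proof.
move=> /(_ x y (x' - x) (y' - y)) [s1 [s2]].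
rewrite !(addrC x) !(addrC y) !subrK => -> ha hb.
by apply: dvD; apply: dvMr.
Qed.

Lemma newton2 (F1 F2 j11 j12 j21 j22 : R -> R -> R) x0 y0 :
  Tay F1 j11 j12 -> Tay F2 j21 j22 -> Jc j11 -> Jc j12 -> Jc j21 -> Jc j22 ->
  ~ dv 1 (j11 x0 y0 * j22 x0 y0 - j12 x0 y0 * j21 x0 y0) ->
  dv 1 (F1 x0 y0) -> dv 1 (F2 x0 y0) ->
  exists x y, F1 x y = 0 /\ F2 x y = 0.
Proof.
move=> T1 T2 C11 C12 C21 C22 hdet h10 h20.
have [v hv] := approx_inv hdet.
set det0 := (j11 x0 y0 * j22 x0 y0 - j12 x0 y0 * j21 x0 y0) in hv.
pose A x y := - v * (j22 x0 y0 * F1 x y - j12 x0 y0 * F2 x y).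
pose B x y := - v * (j11 x0 y0 * F2 x y - j21 x0 y0 * F1 x y).
pose step (z : R * R) := (z.1 + A z.1 z.2, z.2 + B z.1 z.2).
pose zs n := iter n step (x0, y0).
have Inv n : [/\ dv 1 ((zs n).1 - x0), dv 1 ((zs n).2 - y0),
    dv n.+1 (F1 (zs n).1 (zs n).2) & dv n.+1 (F2 (zs n).1 (zs n).2)].
  elim: n => [|n [hx hy hF1 hF2]].
    by rewrite /zs /= !subrr; split => //; apply: dvz.
  rewrite /zs iterS -/(zs n) /step /=.
  set x := (zs n).1; set y := (zs n).2.
  have hA : dv n.+1 (A x y).
    by apply: dvMl; apply: dvB; apply: dvMl.
  have hB : dv n.+1 (B x y).
    by apply: dvMl; apply: dvB; apply: dvMl.
  have hA1 : dv 1 (A x y) by apply: dv_le hA.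
  have hB1 : dv 1 (B x y) by apply: dv_le hB.
  have e11 := jc_dv C11 hx hy; have e12 := jc_dv C12 hx hy.
  have e21 := jc_dv C21 hx hy; have e22 := jc_dv C22 hx hy.
  have hres1 := tay_dv x y T1 hA hB.
  have hres2 := tay_dv x y T2 hA hB.
  have le2 : (n.+2 <= n.+1 + n.+1)%N by rewrite addSn ltnS leq_addl.
  split.
  - by rewrite addrAC; apply: dvD.
  - by rewrite addrAC; apply: dvD.
  - have -> : F1 (x + A x y) (y + B x y) =
       (F1 (x + A x y) (y + B x y) - F1 x y - (j11 x y * A x y + j12 x y * B x y))
       + ((1 - det0 * v) * F1 x y + (j11 x y - j11 x0 y0) * A x y
          + (j12 x y - j12 x0 y0) * B x y).
      rewrite /A /B /det0; ring.
    apply: dvD; first by apply: dv_le hres1.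
    apply: dvD; [apply: dvD|].
    + by have := dvM hv hF1; rewrite add1n.
    + by have := dvM e11 hA; rewrite add1n.
    + by have := dvM e12 hB; rewrite add1n.
  - have -> : F2 (x + A x y) (y + B x y) =
       (F2 (x + A x y) (y + B x y) - F2 x y - (j21 x y * A x y + j22 x y * B x y))
       + ((1 - det0 * v) * F2 x y + (j21 x y - j21 x0 y0) * A x y
          + (j22 x y - j22 x0 y0) * B x y).
      rewrite /A /B /det0; ring.
    apply: dvD; first by apply: dv_le hres2.
    apply: dvD; [apply: dvD|].
    + by have := dvM hv hF2; rewrite add1n.
    + by have := dvM e21 hA; rewrite add1n.
    + by have := dvM e22 hB; rewrite add1n.
have stepx n : (zs n.+1).1 - (zs n).1 = A (zs n).1 (zs n).2.
  by rewrite /zs iterS /= addrAC subrr add0r.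
have stepy n : (zs n.+1).2 - (zs n).2 = B (zs n).1 (zs n).2.
  by rewrite /zs iterS /= addrAC subrr add0r.
have [Lx hLx] : exists L, forall n, dv n (L - (zs n).1).
  apply: limit => n; rewrite stepx; apply: (@dv_le n n.+1) => //.
  by case: (Inv n) => _ _ h1 h2; apply: dvMl; apply: dvB; apply: dvMl.
have [Ly hLy] : exists L, forall n, dv n (L - (zs n).2).
  apply: limit => n; rewrite stepy; apply: (@dv_le n n.+1) => //.
  by case: (Inv n) => _ _ h1 h2; apply: dvMl; apply: dvB; apply: dvMl.
exists Lx, Ly; split; apply: dv_zero => n; case: (Inv n) => _ _ h1 h2.
- have := tay_lip (zs n).1 (zs n).2 T1 (hLx n) (hLy n).
  rewrite !(addrC (zs n).1) !(addrC (zs n).2) !subrK => h.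
  rewrite -(subrK (F1 (zs n).1 (zs n).2) (F1 Lx Ly)).
  by apply: dvD => //; apply: dv_le h1.
- have := tay_lip (zs n).1 (zs n).2 T2 (hLx n) (hLy n).
  rewrite !(addrC (zs n).1) !(addrC (zs n).2) !subrK => h.
  rewrite -(subrK (F2 (zs n).1 (zs n).2) (F2 Lx Ly)).
  by apply: dvD => //; apply: dv_le h2.
Qed.

Lemma unit_inv x : ~ dv 1 x -> exists y, x * y = 1.
Proof.
move=> hx; have [v hv] := approx_inv hx.
have := @newton2 (fun a b => x * a - 1) (fun a b => b) (fun _ _ => x) (fun _ _ => 0)
  (fun _ _ => 0) (fun _ _ => 1) v 0.
case.
- by move=> ? ? a b; exists 0, 0, 0; ring.
- by move=> ? ? a b; exists 0, 0, 0; ring.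
- by move=> ? ? a b; exists 0, 0; ring.
- by move=> ? ? a b; exists 0, 0; ring.
- by move=> ? ? a b; exists 0, 0; ring.
- by move=> ? ? a b; exists 0, 0; ring.
- by rewrite mulr1 mul0r subr0.
- by rewrite -opprB; apply: dvN.
- exact: dvz.
by move=> a [b [/eqP h _]]; exists a; move: h; rewrite subr_eq0 => /eqP.
Qed.

Lemma not_dv2 : (2 < p)%N -> ~ dv 1 (2 : R).
Proof.
move=> hp; rewrite dv1P pval_nat m1 modz_nat /= modn_small //.
by move=> /(dvdn_leq (isT : (0 < 2)%N)); rewrite leqNgt hp.
Qed.

End Comp.

Definition P4 (R : comNzRingType) (c0 c1 c2 c3 : R) : {poly R} :=
  'X^4 + c3%:P * 'X^3 + c2%:P * 'X^2 + c1%:P * 'X + c0%:P.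

Lemma coefP4 (R : comNzRingType) (c0 c1 c2 c3 : R) :
  [/\ (P4 c0 c1 c2 c3)`_0 = c0, (P4 c0 c1 c2 c3)`_1 = c1,
      (P4 c0 c1 c2 c3)`_2 = c2 & (P4 c0 c1 c2 c3)`_3 = c3].
Proof.
rewrite /P4 !coefD !coefCM !coefXn !coefX !coefC /=.
split; rewrite ?mulr0 ?mulr1 ?addr0 ?add0r //.
Qed.

Lemma P4E (R : comNzRingType) (g : {poly R}) :
  g \is monic -> size g = 5%N -> g = P4 g`_0 g`_1 g`_2 g`_3.
Proof.
move=> gm gs; apply/polyP => i.
rewrite /P4 !coefD !coefCM !coefXn !coefX !coefC.
case: i => [|[|[|[|[|i]]]]] /=; rewrite ?mulr0 ?mulr1 ?addr0 ?add0r //.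
  by have := monicP gm; rewrite lead_coefE gs.
by rewrite nth_default // gs.
Qed.

Lemma size_quad (R : comNzRingType) (c d : R) : size ('X^2 + c%:P * 'X + d%:P) = 3%N.
Proof.
have -> : 'X^2 + c%:P * 'X + d%:P = ('X + c%:P) * 'X + d%:P.
  by rewrite mulrDl expr2.
rewrite size_MXaddC size_XaddC.
by case: eqP => // h; have := size_XaddC c; rewrite h size_poly0.
Qed.

Theorem claim1 (p : nat) (p_prime : prime p) (p_odd : odd p)
  (zeta alpha beta gamma : 'Z_[p]) (k : nat) :
  ~ (exists y : 'Z_[p], rdvd (p%:R) (y ^+ 2 + zeta)) ->
  rdvd ((p%:R : 'Z_[p]) ^+ k) alpha ->
  rdvd ((p%:R : 'Z_[p]) ^+ k) (beta - gamma) ->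
  (~ rdvd ((p%:R : 'Z_[p]) ^+ k.+1) alpha \/
   ~ rdvd ((p%:R : 'Z_[p]) ^+ k.+1) (beta - gamma)) ->
  let f : {poly 'Z_[p]} :=
    ('X^2 + (p%:R * alpha) *: 'X + (p%:R * beta + zeta)%:P) *
    ('X^2 - (p%:R * alpha) *: 'X + (p%:R * gamma + zeta)%:P) in
  forall g : {poly 'Z_[p]},
    g \is monic -> size g = 5%N ->
    (forall i : nat, rdvd ((p%:R : 'Z_[p]) ^+ (2 * k + 3)) (g`_i - f`_i)) ->
    reducible g.
Proof.
move=> hns [a1 ha] [t1 ht] hnot f g gmon gsize hg.
set pi := (p%:R : 'Z_[p]) in hns ha ht hnot f hg *.
set q := pi ^+ k in ha ht.
have p2 : (2 < p)%N.
  rewrite ltn_neqAle prime_gt1 // andbT; apply/eqP => h; by rewrite -h in p_odd.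
have nb : ~ (dv 1 a1 /\ dv 1 t1).
  case=> [[c1 hc1] [c2 hc2]]; case: hnot; apply.
  - by exists c1; rewrite ha hc1 /q /pi !exprSr expr0 mul1r mulrA.
  - by exists c2; rewrite ht hc2 /q /pi !exprSr expr0 mul1r mulrA.
have hb : beta = gamma + q * t1 by rewrite -ht addrC subrK.
have fP : f = P4 ((pi * beta + zeta) * (pi * gamma + zeta))
   (pi * alpha * (pi * gamma + zeta) - pi * alpha * (pi * beta + zeta))
   ((pi * gamma + zeta) + (pi * beta + zeta) - pi * alpha * (pi * alpha)) 0.
  rewrite /f /P4 -!mul_polyC !(polyCD, polyCN, polyCM) polyC0; ring.
have [c0 hc0] := hg 0%N.
have [c1 hc1] := hg 1%N.
have [c2 hc2] := hg 2%N.
have [c3 hc3] := hg 3%N.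
have [f0E f1E f2E f3E] := coefP4 ((pi * beta + zeta) * (pi * gamma + zeta))
   (pi * alpha * (pi * gamma + zeta) - pi * alpha * (pi * beta + zeta))
   ((pi * gamma + zeta) + (pi * beta + zeta) - pi * alpha * (pi * alpha)) 0.
rewrite fP in hc0 hc1 hc2 hc3.
rewrite f0E in hc0; rewrite f1E in hc1; rewrite f2E in hc2; rewrite f3E in hc3.
have gE := P4E gmon gsize.
move: hc0 hc1 hc2 hc3 gE.
move: (g`_0) (g`_1) (g`_2) (g`_3) => g0 g1 g2 g3.
move/eqP; rewrite subr_eq => /eqP hg0.
move/eqP; rewrite subr_eq => /eqP hg1.
move/eqP; rewrite subr_eq => /eqP hg2.
move/eqP; rewrite subr_eq => /eqP hg3.
move=> ->.
have hQ : pi ^+ (2 * k + 3) = (pi * q) * (pi * q) * pi.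
  by rewrite /q mul2n -addnn !exprD; ring.
rewrite hQ ha hb in hg0 hg1 hg2 hg3.
set P := pi * q in hg0 hg1 hg2 hg3 hQ.
clear fP f0E f1E f2E f3E hg f.
have [i2 hi2] := unit_inv p_prime (not_dv2 p_prime p2).
pose h := i2 * g3.
pose e2 := g2 - h * h.
pose e1 := g1 - h * e2.
pose E1 := - (a1 * t1) + pi * (c1 - i2 * c3 * e2).
pose r := c2 - i2 * i2 * (P * P * pi) * c3 * c3.
pose sf := 2 * zeta + pi * (gamma + q * t1 + gamma).
pose f2 := pi * gamma + zeta + (pi * (gamma + q * t1) + zeta) - pi * (q * a1) * (pi * (q * a1)).
pose D := - (2 * sf * a1 * a1) + P * P * a1 * a1 * a1 * a1 + t1 * t1
   + pi * (2 * f2 * r + P * P * pi * r * r - 4 * c0).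
have hE1 : P * P * E1 = e1.
  by rewrite /E1 /e1 /h hg1 hg3 /P; ring.
have hD : P * P * D = e2 * e2 - 4 * g0.
  by rewrite /D /e2 /h /sf /f2 /r hg0 hg2 hg3 /P; ring.
pose G1 := fun U T : 'Z_[p] => U * T + h * U * U - E1.
pose G2 := fun U T : 'Z_[p] => D + 2 * e2 * U * U + P * P * U * U * U * U - T * T.
pose j11 := fun U T : 'Z_[p] => T + 2 * h * U.
pose j12 := fun U T : 'Z_[p] => U.
pose j21 := fun U T : 'Z_[p] => 4 * e2 * U + 4 * P * P * U * U * U.
pose j22 := fun U T : 'Z_[p] => - 2 * T.
have T1 : Tay G1 j11 j12.
  by move=> U T a b; exists h, 1, 0; rewrite /G1 /j11 /j12 /=; ring.
have T2 : Tay G2 j21 j22.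
  move=> U T a b; exists (2 * e2 + P * P * (6 * U * U + 4 * U * a + a * a)), 0, (-1).
  by rewrite /G2 /j21 /j22 /=; ring.
have C11 : Jc j11 by move=> U T a b; exists (2 * h), 1; rewrite /j11; ring.
have C12 : Jc j12 by move=> U T a b; exists 1, 0; rewrite /j12; ring.
have C21 : Jc j21.
  move=> U T a b; exists (4 * e2 + 4 * P * P * (3 * U * U + 3 * U * a + a * a)), 0.
  by rewrite /j21; ring.
have C22 : Jc j22 by move=> U T a b; exists 0, (-2); rewrite /j22; ring.
have h1 : dv 1 (G1 a1 (- t1)).
  have -> : G1 a1 (- t1) = pi * (i2 * P * P * c3 * a1 * a1 - c1 + i2 * c3 * e2).
    by rewrite /G1 /E1 /h hg3 /P; ring.
  exact: dv_pi1.
have h2 : dv 1 (G2 a1 (- t1)).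
  have -> : G2 a1 (- t1) = pi * (2 * a1 * a1 * P * P * r + (2 * f2 * r + P * P * pi * r * r - 4 * c0)).
    by rewrite /G2 /D /e2 /h /sf /f2 /r hg2 hg3 /P; ring.
  exact: dv_pi1.
have hdet : ~ dv 1 (j11 a1 (- t1) * j22 a1 (- t1) - j12 a1 (- t1) * j21 a1 (- t1)).
  move=> hd.
  set N := t1 * t1 + 4 * zeta * (a1 * a1).
  have hN : dv 1 ((- 2) * N).
    have -> : (- 2) * N = (j11 a1 (- t1) * j22 a1 (- t1) - j12 a1 (- t1) * j21 a1 (- t1))
       - pi * (4 * i2 * P * P * c3 * a1 * t1 - 4 * a1 * a1 * (2 * gamma + q * t1)
               - 4 * P * P * r * a1 * a1).
      by rewrite /N /j11 /j12 /j21 /j22 /e2 /h /r hg2 hg3 /P; ring.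
    by apply: dvB => //; apply: dv_pi1.
  have hN2 : dv 1 N.
    case: (dv1M p_prime hN) => // h2'.
    by exfalso; apply: (not_dv2 p_prime p2); have := dvN h2'; rewrite opprK.
  have [ha1|na1] := boolp.pselect (dv 1 a1).
    apply: nb; split => //.
    have : dv 1 (t1 * t1).
      have -> : t1 * t1 = N - 4 * zeta * (a1 * a1) by rewrite /N; ring.
      by apply: dvB => //; apply: dvMl; apply: dvMl.
    by case/(dv1M p_prime).
  have n2a : ~ dv 1 (2 * a1).
    by case/(dv1M p_prime) => //; apply: not_dv2.
  have [w hw] := unit_inv p_prime n2a.
  apply: hns; exists (t1 * w).
  have -> : (t1 * w) ^+ 2 + zeta = w * w * N - zeta * (2 * a1 * w - 1) * (2 * a1 * w + 1).
    by rewrite /N; ring.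
  rewrite hw subrr mulr0 mul0r subr0.
  have : dv 1 (w * w * N) by apply: dvMl.
  by rewrite /dv expr1.
have [U [T [hG1 hG2]]] := newton2 p_prime T1 T2 C11 C12 C21 C22 hdet h1 h2.
pose u := P * U. pose t := P * T. pose s := e2 + u * u.
pose bb := i2 * (s - t). pose dd := i2 * (s + t).
pose aa := h + u. pose cc := h - u.
have e3 : g3 = aa + cc.
  apply/eqP; rewrite -subr_eq0.
  have -> : g3 - (aa + cc) = (1 - 2 * i2) * g3 by rewrite /aa /cc /h; ring.
  by rewrite hi2 subrr mul0r.
have e2' : g2 = bb + dd + aa * cc.
  apply/eqP; rewrite -subr_eq0.
  have -> : g2 - (bb + dd + aa * cc) = (1 - 2 * i2) * s
    by rewrite /bb /dd /aa /cc /s /u /e2; ring.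
  by rewrite hi2 subrr mul0r.
have e1' : g1 = aa * dd + bb * cc.
  apply/eqP; rewrite -subr_eq0.
  have -> : g1 - (aa * dd + bb * cc) = (1 - 2 * i2) * (h * s + u * t) - P * P * G1 U T
      + (e1 - P * P * E1)
    by rewrite /bb /dd /aa /cc /s /u /t /G1 /e1; ring.
  by rewrite hi2 hG1 hE1 !subrr mulr0 mul0r subr0 addr0.
have e0' : g0 = bb * dd.
  apply/eqP; rewrite -subr_eq0.
  have -> : g0 - bb * dd = (1 - 2 * i2) * (1 + 2 * i2) * g0 - i2 * i2 * P * P * G2 U T
      + i2 * i2 * (P * P * D - (e2 * e2 - 4 * g0))
    by rewrite /bb /dd /s /u /t /G2; ring.
  by rewrite hi2 hG2 hD !subrr !mulr0 !mul0r subr0 addr0.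
exists ('X^2 + aa%:P * 'X + bb%:P), ('X^2 + cc%:P * 'X + dd%:P).
rewrite !size_quad; split => //; split => //.
rewrite /P4 e3 e2' e1' e0' !(polyCD, polyCM); ring.
Qed.
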